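(* Let $\mathbb{U}$ be the Urysohn space and let $\mathbf{A},\mathbf{B}\subset\mathbb{U}$ be finite. Then for every $p\in\mathrm{Iso}_{\mathbf{A}\cap\mathbf{B}}(\mathbb{U})$ and every finite $\mathbf{C}\subseteq\mathbb{U}$ there is $q\in\langle\mathrm{Iso}_{\mathbf{A}}(\mathbb{U}),\mathrm{Iso}_{\mathbf{B}}(\mathbb{U})\rangle$ such that $q(x)=p(x)$ for all $x\in\mathbf{C}$.
   Context: The Urysohn space $\mathbb{U}$ is the unique (up to isometry) complete separable metric space into which every finite metric space embeds isometrically and in which every isometry between finite subsets extends to an isometry of $\mathbb{U}$. For $\mathbf{D}\subseteq\mathbb{U}$, $\mathrm{Iso}_{\mathbf{D}}(\mathbb{U})$ is the subgroup of isometries of $\mathbb{U}$ fixing $\mathbf{D}$ pointwise; $\langle X,Y\rangle$ is the subgroup generated by $X\cup Y$. *)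

(* Defs.v *)
From Stdlib Require Export Reals List.
Open Scope R_scope.

Section Urysohn.
Variable X : Type.
Variable d : X -> X -> R.

Definition is_metric : Prop :=
  (forall x y, 0 <= d x y) /\
  (forall x y, d x y = 0 <-> x = y) /\
  (forall x y, d x y = d y x) /\
  (forall x y z, d x z <= d x y + d y z).

Definition is_cauchy (u : nat -> X) : Prop :=
  forall eps, 0 < eps -> exists N, forall m n, (N <= m)%nat -> (N <= n)%nat -> d (u m) (u n) < eps.
Definition converges_to (u : nat -> X) (l : X) : Prop :=
  forall eps, 0 < eps -> exists N, forall n, (N <= n)%nat -> d (u n) l < eps.
Definition complete : Prop :=
  forall u, is_cauchy u -> exists l, converges_to u l.

Definition separable : Prop :=
  exists s : nat -> X, forall x eps, 0 < eps -> exists n, d x (s n) < eps.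

Definition finite_metric (n : nat) (f : nat -> nat -> R) : Prop :=
  (forall i j, (i < n)%nat -> (j < n)%nat -> 0 <= f i j) /\
  (forall i j, (i < n)%nat -> (j < n)%nat -> (f i j = 0 <-> i = j)) /\
  (forall i j, (i < n)%nat -> (j < n)%nat -> f i j = f j i) /\
  (forall i j k, (i < n)%nat -> (j < n)%nat -> (k < n)%nat -> f i k <= f i j + f j k).

Definition finitely_universal : Prop :=
  forall n f, finite_metric n f ->
    exists e : nat -> X, forall i j, (i < n)%nat -> (j < n)%nat -> d (e i) (e j) = f i j.

Definition is_isometry (g : X -> X) : Prop :=
  (forall x y, d (g x) (g y) = d x y) /\ (forall y, exists x, g x = y).

(** every isometry between finite subsets extends to an isometry of X.
    A finite partial isometry is given by two lists xs, ys of equal length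
    with xs_i |-> ys_i distance-preserving. *)
Definition finitely_homogeneous : Prop :=
  forall (xs ys : list X) (x0 : X), length xs = length ys ->
    (forall i j, (i < length xs)%nat -> (j < length xs)%nat ->
       d (nth i ys x0) (nth j ys x0) = d (nth i xs x0) (nth j xs x0)) ->
    exists g, is_isometry g /\
      forall i, (i < length xs)%nat -> g (nth i xs x0) = nth i ys x0.

Definition is_Urysohn : Prop :=
  is_metric /\ complete /\ separable /\ finitely_universal /\ finitely_homogeneous.

Definition Iso_fix (D : X -> Prop) (g : X -> X) : Prop :=
  is_isometry g /\ forall x, D x -> g x = x.

Inductive gen_group (S : (X -> X) -> Prop) : (X -> X) -> Prop :=
  | gen_id : gen_group S (fun x => x)
  | gen_base : forall g, S g -> gen_group S g
  | gen_comp : forall f g, gen_group S f -> gen_group S g -> gen_group S (fun x => f (g x))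
  | gen_inv : forall f g, gen_group S f ->
      (forall x, f (g x) = x) -> (forall x, g (f x) = x) -> gen_group S g.

End Urysohn.

(* Main.v *)
Require Import Defs.
From Stdlib Require Import Reals Lra Lia List Classical ClassicalEpsilon.
Open Scope R_scope.

Lemma m_nn U d (HU : is_Urysohn U d) x y : 0 <= d x y.
Proof. destruct HU as [[H _] _]. apply H. Qed.
Lemma m_zero U d (HU : is_Urysohn U d) x y : d x y = 0 <-> x = y.
Proof. destruct HU as [[_ [H _]] _]. apply H. Qed.
Lemma m_refl U d (HU : is_Urysohn U d) x : d x x = 0.
Proof. apply (m_zero U d HU). reflexivity. Qed.
Lemma m_sym U d (HU : is_Urysohn U d) x y : d x y = d y x.
Proof. destruct HU as [[_ [_ [H _]]] _]. apply H. Qed.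
Lemma m_tri U d (HU : is_Urysohn U d) x y z : d x z <= d x y + d y z.
Proof. destruct HU as [[_ [_ [_ H]]] _]. apply H. Qed.

Definition lmin {U} (f : U -> R) (def : U) (L : list U) : R :=
  fold_right (fun a r => Rmin (f a) r) (f def) L.

Lemma lmin_le {U} (f : U -> R) def L y : (y = def \/ In y L) -> lmin f def L <= f y.
Proof.
  induction L as [|a L IH]; simpl; intros [H|H].
  - subst; lra.
  - contradiction.
  - eapply Rle_trans; [apply Rmin_r|]. apply IH; auto.
  - destruct H as [H|H].
    + subst; apply Rmin_l.
    + eapply Rle_trans; [apply Rmin_r|]. apply IH; auto.
Qed.

Lemma lmin_att {U} (f : U -> R) def L : exists y, (y = def \/ In y L) /\ lmin f def L = f y.
Proof.
  induction L as [|a L IH]; simpl.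
  - exists def; auto.
  - destruct IH as [y [Hy Hf]]. fold (lmin f def L). unfold Rmin. destruct (Rle_dec (f a) (lmin f def L)).
    + exists a; auto.
    + exists y; split; [destruct Hy; auto|]. exact Hf.
Qed.

Definition kf {U} (d : U -> U -> R) (x def : U) (L : list U) (u : U) : R :=
  lmin (fun a => d x a + d a u) def L.

Lemma kf_nn U d (HU : is_Urysohn U d) x def L u : 0 <= kf d x def L u.
Proof.
  unfold kf. destruct (lmin_att (fun a => d x a + d a u) def L) as [y [_ ->]].
  pose proof (m_nn U d HU x y); pose proof (m_nn U d HU y u); lra.
Qed.

Lemma kf_lip U d (HU : is_Urysohn U d) x def L u u' :
  kf d x def L u <= kf d x def L u' + d u' u.
Proof.
  unfold kf. destruct (lmin_att (fun a => d x a + d a u') def L) as [y [Hy ->]].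
  eapply Rle_trans; [apply (lmin_le _ _ _ y Hy)|].
  pose proof (m_tri U d HU y u' u); lra.
Qed.

Lemma kf_tri U d (HU : is_Urysohn U d) x def L u u' :
  d u u' <= kf d x def L u + kf d x def L u'.
Proof.
  unfold kf. destruct (lmin_att (fun a => d x a + d a u) def L) as [y [_ ->]].
  destruct (lmin_att (fun a => d x a + d a u') def L) as [y' [_ ->]].
  pose proof (m_tri U d HU u y u'); pose proof (m_tri U d HU y x u');
  pose proof (m_tri U d HU x y' u'); pose proof (m_sym U d HU u y);
  pose proof (m_sym U d HU x y). lra.
Qed.

Lemma kf_ge U d (HU : is_Urysohn U d) x def L u : d x u <= kf d x def L u.
Proof.
  unfold kf. destruct (lmin_att (fun a => d x a + d a u) def L) as [y [_ ->]].
  apply (m_tri U d HU).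
Qed.

Lemma kf_on U d (HU : is_Urysohn U d) x def L a : (a = def \/ In a L) -> kf d x def L a = d x a.
Proof.
  intros Ha. apply Rle_antisym.
  - unfold kf. eapply Rle_trans; [apply (lmin_le _ _ _ a Ha)|]. rewrite (m_refl U d HU); lra.
  - apply kf_ge; auto.
Qed.

Lemma U_inh U d (HU : is_Urysohn U d) : exists u : U, True.
Proof.
  destruct HU as [_ [_ [_ [Hu _]]]].
  destruct (Hu 0%nat (fun _ _ => 0)) as [e _].
  - repeat split; intros; lia.
  - exists (e 0%nat); auto.
Qed.

Definition decU {U} (x y : U) : {x = y} + {x <> y} := excluded_middle_informative (x = y).

Lemma nth_map_seq {U} (e : nat -> U) n i x0 : (i < n)%nat -> nth i (map e (seq 0 n)) x0 = e i.
Proof.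
  intros H. rewrite nth_indep with (d' := e 0%nat) by (rewrite length_map, length_seq; auto).
  rewrite map_nth, seq_nth by auto. reflexivity.
Qed.

Lemma EXT U d (HU : is_Urysohn U d) (L : list U) (phi : U -> R) :
  (forall u, In u L -> 0 <= phi u) ->
  (forall u u', In u L -> In u' L -> phi u <= phi u' + d u' u) ->
  (forall u u', In u L -> In u' L -> d u u' <= phi u + phi u') ->
  exists y, forall u, In u L -> d y u = phi u.
Proof.
  intros Hnn Hlip Htri.
  destruct (classic (exists u, In u L /\ phi u = 0)) as [[u0 [Hu0 H0]]|Hpos].
  - exists u0. intros u Hu. apply Rle_antisym.
    + pose proof (Htri u0 u Hu0 Hu); lra.
    + pose proof (Hlip u u0 Hu Hu0); lra.
  - assert (Hp : forall u, In u L -> 0 < phi u).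
    { intros u Hu. destruct (Hnn u Hu); auto. exfalso; apply Hpos; eauto. }
    destruct (U_inh U d HU) as [x0 _].
    set (L' := nodup decU L). set (n := length L').
    assert (HL' : forall i, (i < n)%nat -> In (nth i L' x0) L).
    { intros i Hi. apply (nodup_In decU). apply nth_In. auto. }
    assert (Hnd : NoDup L') by apply NoDup_nodup.
    set (f := fun i j => if Nat.ltb i n then (if Nat.ltb j n then d (nth i L' x0) (nth j L' x0) else phi (nth i L' x0))
                         else (if Nat.ltb j n then phi (nth j L' x0) else 0)).
    assert (Hfm : finite_metric (S n) f).
    { unfold f; split; [|split; [|split]].
      - intros i j Hi Hj. destruct (Nat.ltb_spec i n), (Nat.ltb_spec j n);
          try apply (m_nn U d HU); try (apply Hnn; apply HL'; auto); lra.
      - intros i j Hi Hj. split.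
        + destruct (Nat.ltb_spec i n), (Nat.ltb_spec j n); intros Hz.
          * apply (NoDup_nth L' x0); auto. apply (m_zero U d HU); auto.
          * exfalso. pose proof (Hp _ (HL' i H)); lra.
          * exfalso. pose proof (Hp _ (HL' j H0)); lra.
          * lia.
        + intros Hz; subst. destruct (Nat.ltb_spec j n).
          * apply (m_refl U d HU).
          * reflexivity.
      - intros i j Hi Hj. destruct (Nat.ltb_spec i n), (Nat.ltb_spec j n); try reflexivity.
        apply (m_sym U d HU).
      - intros i j k Hi Hj Hk. destruct (Nat.ltb_spec i n), (Nat.ltb_spec j n), (Nat.ltb_spec k n).
        + apply (m_tri U d HU).
        + rewrite (m_sym U d HU (nth i L' x0)). pose proof (Hlip _ _ (HL' i H) (HL' j H0)); lra.
        + apply Htri; apply HL'; auto.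
        + pose proof (Hnn _ (HL' i H)); lra.
        + pose proof (Hlip _ _ (HL' k H1) (HL' j H0)); lra.
        + pose proof (m_nn U d HU (nth j L' x0) (nth j L' x0)). pose proof (Hnn _ (HL' j H0)); lra.
        + lra.
        + lra. }
    destruct HU as [Hm [Hc [Hs [Hu Hh]]]].
    destruct (Hu (S n) f Hfm) as [e He].
    destruct (Hh (map e (seq 0 n)) L' x0) as [g [[Hgd _] Hg]].
    + rewrite length_map, length_seq. reflexivity.
    + rewrite length_map, length_seq. intros i j Hi Hj.
      rewrite !nth_map_seq by auto. rewrite He by lia. unfold f.
      destruct (Nat.ltb_spec i n); try lia. destruct (Nat.ltb_spec j n); try lia. reflexivity.
    + exists (g (e n)). intros u Hu'.
      assert (HuL : In u L') by (apply nodup_In; auto).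
      destruct (In_nth L' u x0 HuL) as [k [Hk Hku]].
      rewrite length_map, length_seq in Hg.
      pose proof (Hg k Hk) as Hgk. rewrite nth_map_seq in Hgk by auto.
      rewrite Hku in Hgk. rewrite <- Hgk, Hgd, He by lia. unfold f.
      destruct (Nat.ltb_spec n n); try lia. destruct (Nat.ltb_spec k n); try lia.
      rewrite Hku, Hgk; reflexivity.
Qed.

Lemma HOM U d (HU : is_Urysohn U d) (L : list U) x y :
  (forall u, In u L -> d x u = d y u) ->
  exists g, Iso_fix U d (fun u => In u L) g /\ g x = y.
Proof.
  intros H. pose proof HU as HU'. destruct HU' as [Hm [Hc [Hs [Hu Hh]]]].
  destruct (Hh (x :: L) (y :: L) x) as [g [Hg Hgi]].
  - reflexivity.
  - simpl. intros i j Hi Hj. destruct i as [|i], j as [|j].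
    + rewrite !(m_refl U d HU). reflexivity.
    + symmetry. apply H. apply nth_In. lia.
    + rewrite (m_sym U d HU), (m_sym U d HU (nth i L x)). symmetry. apply H. apply nth_In. lia.
    + reflexivity.
  - exists g. split; [split; auto|].
    + intros u Hu'. destruct (In_nth L u x Hu') as [k [Hk Hku]].
      pose proof (Hgi (S k)) as Hs'. simpl in Hs'. rewrite Hku in Hs'. apply Hs'. lia.
    + apply (Hgi 0%nat). simpl; lia.
Qed.

Lemma iso_inv U d (HU : is_Urysohn U d) g : is_isometry U d g ->
  exists gi, is_isometry U d gi /\ (forall x, g (gi x) = x) /\ (forall x, gi (g x) = x).
Proof.
  intros [Hd Hs].
  set (gi := fun y => proj1_sig (constructive_indefinite_description _ (Hs y))).
  assert (H1 : forall y, g (gi y) = y) by (intro y; unfold gi; destruct constructive_indefinite_description; auto).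
  assert (H2 : forall x, gi (g x) = x).
  { intro x. apply (m_zero U d HU). rewrite <- Hd, H1. apply (m_refl U d HU). }
  exists gi. repeat split; auto.
  - intros x y. rewrite <- Hd, !H1. reflexivity.
  - intros y. exists (g y). auto.
Qed.

Definition Sg U d (A B : list U) : (U -> U) -> Prop :=
  fun g => Iso_fix U d (fun x => In x A) g \/ Iso_fix U d (fun x => In x B) g.

Lemma grp_iso U d (HU : is_Urysohn U d) A B g : gen_group U (Sg U d A B) g -> is_isometry U d g.
Proof.
  induction 1 as [|g [[H _]|[H _]]|f g _ [Hf Hfs] _ [Hg Hgs]|f g _ [Hf Hfs] H1 H2].
  - split; auto. intros y; exists y; auto.
  - exact H.
  - exact H.
  - split.
    + intros; rewrite Hf, Hg; auto.
    + intros y. destruct (Hfs y) as [x Hx]. destruct (Hgs x) as [z Hz]. exists z. rewrite Hz; auto.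
  - split.
    + intros x y. rewrite <- Hf, !H1. reflexivity.
    + intros y. exists (f y). auto.
Qed.

Lemma grp_fix U d A B g : gen_group U (Sg U d A B) g -> forall x, In x A -> In x B -> g x = x.
Proof.
  induction 1 as [|g [[_ H]|[_ H]]|f g _ IHf _ IHg|f g _ IHf H1 H2]; intros x HA HB; auto.
  - rewrite IHg, IHf; auto.
  - rewrite <- (IHf x HA HB) at 1. apply H2.
Qed.

Lemma grp_mono U d A B A' B' g :
  (forall x, In x A -> In x A') -> (forall x, In x B -> In x B') ->
  gen_group U (Sg U d A' B') g -> gen_group U (Sg U d A B) g.
Proof.
  intros HA HB. induction 1 as [|g [[H1 H2]|[H1 H2]]|f g _ IHf _ IHg|f g _ IHf H1 H2].
  - apply gen_id.
  - apply gen_base. left. split; auto.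
  - apply gen_base. right. split; auto.
  - apply gen_comp; auto.
  - eapply gen_inv; eauto.
Qed.

Definition reach U d (A B : list U) x y := exists g, gen_group U (Sg U d A B) g /\ g x = y.

Lemma reach_trans U d A B x y z : reach U d A B x y -> reach U d A B y z -> reach U d A B x z.
Proof.
  intros [g1 [H1 E1]] [g2 [H2 E2]]. exists (fun u => g2 (g1 u)). split.
  - apply gen_comp; auto.
  - subst; auto.
Qed.

Lemma grp_inv U d (HU : is_Urysohn U d) A B g : gen_group U (Sg U d A B) g ->
  exists gi, gen_group U (Sg U d A B) gi /\ (forall x, g (gi x) = x) /\ (forall x, gi (g x) = x).
Proof.
  intros Hg. destruct (iso_inv U d HU g (grp_iso U d HU A B g Hg)) as [gi [_ [H1 H2]]].
  exists gi. split; auto. eapply gen_inv; eauto.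
Qed.

Lemma reach_sym U d (HU : is_Urysohn U d) A B x y : reach U d A B x y -> reach U d A B y x.
Proof.
  intros [g [Hg E]]. destruct (grp_inv U d HU A B g Hg) as [gi [Hgi [H1 H2]]].
  exists gi. split; auto. subst; auto.
Qed.

Lemma moveA U d (HU : is_Urysohn U d) A B x y : (forall a, In a A -> d x a = d y a) -> reach U d A B x y.
Proof.
  intros H. destruct (HOM U d HU A x y H) as [g [Hg E]]. exists g. split; auto.
  apply gen_base. left; auto.
Qed.

Lemma moveB U d (HU : is_Urysohn U d) A B x y : (forall a, In a B -> d x a = d y a) -> reach U d A B x y.
Proof.
  intros H. destruct (HOM U d HU B x y H) as [g [Hg E]]. exists g. split; auto.
  apply gen_base. right; auto.
Qed.

Lemma sep1 U d (HU : is_Urysohn U d) (a : U) (L : list U) :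
  exists m, 0 < m /\ forall b, In b L -> a <> b -> m <= d a b.
Proof.
  induction L as [|b L [m [Hm IH]]].
  - exists 1; split; [lra|]. intros b [].
  - destruct (excluded_middle_informative (a = b)) as [E|E].
    + exists m; split; auto. intros b' [<-|Hb'] Hne; [contradiction|auto].
    + assert (0 < d a b).
      { destruct (m_nn U d HU a b); auto. exfalso. apply E. apply (m_zero U d HU); auto. }
      exists (Rmin m (d a b)). split; [apply Rmin_glb_lt; auto|].
      intros b' [<-|Hb'] Hne; [apply Rmin_r|]. eapply Rle_trans; [apply Rmin_l|auto].
Qed.

Lemma sep2 U d (HU : is_Urysohn U d) (A B : list U) :
  exists m, 0 < m /\ forall a b, In a A -> In b B -> a <> b -> m <= d a b.
Proof.
  induction A as [|a A [m [Hm IH]]].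
  - exists 1; split; [lra|]. intros a b [].
  - destruct (sep1 U d HU a B) as [m1 [Hm1 H1]].
    exists (Rmin m m1). split; [apply Rmin_glb_lt; auto|].
    intros a' b [<-|Ha] Hb Hne.
    + eapply Rle_trans; [apply Rmin_r|auto].
    + eapply Rle_trans; [apply Rmin_l|auto].
Qed.

Lemma lbound {U} (f : U -> R) (L : list U) : exists M, forall a, In a L -> f a <= M.
Proof.
  induction L as [|a L [M IH]].
  - exists 0; intros a [].
  - exists (Rmax (f a) M). intros b [<-|Hb]; [apply Rmax_l|].
    eapply Rle_trans; [apply IH; auto|apply Rmax_r].
Qed.

Lemma ext_kf U d (HU : is_Urysohn U d) x def L L' :
  exists y, forall u, In u L' -> d y u = kf d x def L u.
Proof.
  apply (EXT U d HU).
  - intros; apply kf_nn; auto.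
  - intros; apply kf_lip; auto.
  - intros; apply kf_tri; auto.
Qed.

Definition interl {U} (A B : list U) : list U :=
  filter (fun a => if excluded_middle_informative (In a B) then true else false) A.

Lemma interl_In {U} (A B : list U) x : In x (interl A B) <-> In x A /\ In x B.
Proof.
  unfold interl. rewrite filter_In.
  destruct (excluded_middle_informative (In x B)); intuition congruence.
Qed.

Lemma SPmain U d (HU : is_Urysohn U d) (A B : list U) (i0 : U) (p : U -> U) c :
  In i0 A -> In i0 B ->
  Iso_fix U d (fun x => In x A /\ In x B) p ->
  reach U d A B c (p c).
Proof.
  intros HA0 HB0 [[Hpd Hps] Hpf].
  set (I := interl A B).
  assert (HI0 : In i0 I) by (apply interl_In; auto).
  set (F := kf d c i0 I).
  assert (HIdef : forall y, y = i0 \/ In y I -> In y I) by (intros y [->|H]; auto).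
  assert (HFI : forall i, In i I -> F i = d c i) by (intros; apply kf_on; auto).
  destruct (ext_kf U d HU c i0 I A) as [w Hw].
  destruct (sep2 U d HU A B) as [m [Hm Hsep]].
  destruct (lbound F A) as [Fmax HFmax].
  set (Pr := fun x => forall i, In i I -> d x i = d c i).
  assert (HxF : forall x, Pr x -> forall u, d x u <= F u).
  { intros x Hx u. unfold F, kf. destruct (lmin_att (fun a => d c a + d a u) i0 I) as [i [Hi ->]].
    rewrite <- (Hx i (HIdef i Hi)). apply (m_tri U d HU). }
  assert (Main : forall N x, Pr x -> (forall a, In a A -> d x a < F a -> Fmax - INR N * m <= d x a) ->
                   reach U d A B x w).
  { induction N as [|N IHN]; intros x Hx Hdef.
    - apply (moveA U d HU); auto. intros a Ha. rewrite Hw by auto.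
      destruct (Rle_lt_or_eq_dec _ _ (HxF x Hx a)) as [Hlt|Heq]; auto.
      exfalso. pose proof (Hdef a Ha Hlt). pose proof (HFmax a Ha). simpl in *. lra.
    - destruct (ext_kf U d HU x i0 A (A ++ B)) as [x1 Hx1].
      assert (Hx1A : forall a, In a A -> d x1 a = d x a).
      { intros a Ha. rewrite Hx1 by (apply in_or_app; auto). apply kf_on; auto. }
      assert (Pr1 : Pr x1).
      { intros i Hi. rewrite Hx1A; [apply Hx; auto|]. apply interl_In in Hi; tauto. }
      destruct (ext_kf U d HU x1 i0 B (A ++ B)) as [x2 Hx2].
      assert (Hx2B : forall b, In b B -> d x2 b = d x1 b).
      { intros b Hb. rewrite Hx2 by (apply in_or_app; auto). apply kf_on; auto. }
      assert (Pr2 : Pr x2).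
      { intros i Hi. rewrite Hx2B; [apply Pr1; auto|]. apply interl_In in Hi; tauto. }
      apply reach_trans with x1; [apply (moveA U d HU); intros a Ha; symmetry; auto|].
      apply reach_trans with x2; [apply (moveB U d HU); intros b Hb; symmetry; auto|].
      apply (IHN x2 Pr2). intros a Ha Hlt.
      rewrite Hx2 in Hlt |- * by (apply in_or_app; auto).
      unfold kf in Hlt |- *.
      destruct (lmin_att (fun b => d x1 b + d b a) i0 B) as [b [Hb Eb]]. rewrite Eb in Hlt |- *.
      assert (HbB : In b B) by (destruct Hb as [->|]; auto).
      assert (Hlb : F a <= F b + d b a) by apply (kf_lip U d HU).
      assert (Hb1 : d x1 b < F b) by (pose proof (m_nn U d HU b a); lra).
      assert (HbA : ~ In b A).
      { intros HbA. rewrite (HFI b) in Hb1 by (apply interl_In; auto).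
        rewrite (Pr1 b) in Hb1 by (apply interl_In; auto). lra. }
      rewrite Hx1 in Hb1 |- * by (apply in_or_app; auto). unfold kf in Hb1 |- *.
      destruct (lmin_att (fun a' => d x a' + d a' b) i0 A) as [a' [Ha' Ea']]. rewrite Ea' in Hb1 |- *.
      assert (Ha'A : In a' A) by (destruct Ha' as [->|]; auto).
      assert (Hla : F b <= F a' + d a' b) by apply (kf_lip U d HU).
      assert (Ha1 : d x a' < F a') by (pose proof (m_nn U d HU a' b); lra).
      assert (Hne : a' <> b) by (intros ->; contradiction).
      pose proof (Hsep a' b Ha'A HbB Hne).
      pose proof (Hdef a' Ha'A Ha1). rewrite S_INR in H0.
      pose proof (m_nn U d HU b a). lra. }
  destruct (INR_archimed m Fmax Hm) as [N HN].
  assert (Hc : reach U d A B c w).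
  { apply (Main N c); [intros i _; auto|]. intros a _ _. pose proof (m_nn U d HU c a). lra. }
  assert (Hpc : reach U d A B (p c) w).
  { apply (Main N (p c)).
    - intros i Hi. apply interl_In in Hi. rewrite <- (Hpf i Hi) at 1. apply Hpd.
    - intros a _ _. pose proof (m_nn U d HU (p c) a). lra. }
  apply reach_trans with w; auto. apply (reach_sym U d HU); auto.
Qed.

Lemma SPgen U d (HU : is_Urysohn U d) (A B : list U) (p : U -> U) c :
  Iso_fix U d (fun x => In x A /\ In x B) p ->
  reach U d A B c (p c).
Proof.
  intros Hp. pose proof Hp as [[Hpd Hps] Hpf].
  set (pinv := fun y => proj1_sig (constructive_indefinite_description _ (Hps y))).
  assert (Hpinv : forall y, p (pinv y) = y) by (intro y; unfold pinv; destruct constructive_indefinite_description; auto).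
  set (L := A ++ B ++ map pinv (A ++ B)).
  destruct (lbound (fun u => d c u) L) as [M HM].
  set (K := Rmax M 0).
  destruct (EXT U d HU L (fun _ => K)) as [z Hz].
  - intros; apply Rmax_r.
  - intros; pose proof (m_nn U d HU u' u); lra.
  - intros u u' Hu Hu'. pose proof (m_tri U d HU u c u'). rewrite (m_sym U d HU u c) in H.
    pose proof (HM u Hu); pose proof (HM u' Hu'). pose proof (Rmax_l M 0). unfold K. simpl in *. lra.
  - destruct (HOM U d HU (A ++ B) z (p z)) as [h [[Hh Hhf] Ehz]].
    { intros u Hu. rewrite Hz by (unfold L; apply in_or_app; destruct (in_app_or _ _ _ Hu); [left|right; apply in_or_app; left]; auto).
      rewrite <- (Hpinv u) at 1. rewrite Hpd. symmetry. apply Hz.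
      unfold L. apply in_or_app; right; apply in_or_app; right. apply in_map; auto. }
    assert (Hhg : gen_group U (Sg U d A B) h).
    { apply gen_base; left; split; auto. intros x Hx; apply Hhf; apply in_or_app; auto. }
    destruct (grp_inv U d HU A B h Hhg) as [hi [Hhig [H1 H2]]].
    destruct (grp_iso U d HU A B hi Hhig) as [Hhid _].
    assert (Hp' : Iso_fix U d (fun x => In x (z :: A) /\ In x (z :: B)) (fun x => hi (p x))).
    { split; [split|].
      - intros x y. rewrite Hhid; auto.
      - intros y. destruct (Hps (h y)) as [x Hx]. exists x. rewrite Hx; auto.
      - intros x [[Ex|HxA] [Ex'|HxB]];
          try (rewrite <- Ex; rewrite <- Ehz; apply H2);
          try (rewrite <- Ex'; rewrite <- Ehz; apply H2).
        rewrite Hpf by auto. apply (grp_fix U d A B hi Hhig); auto. }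
    destruct (SPmain U d HU (z :: A) (z :: B) z _ c (or_introl eq_refl) (or_introl eq_refl) Hp') as [g' [Hg' Eg']].
    exists (fun x => h (g' x)). split.
    + apply gen_comp; auto. apply (grp_mono U d A B (z :: A) (z :: B)); auto; intros; simpl; auto.
    + rewrite Eg'. auto.
Qed.

Theorem theorem4p16 (U : Type) (d : U -> U -> R) (HU : is_Urysohn U d)
  (A B : list U) :
  forall p : U -> U,
    Iso_fix U d (fun x => In x A /\ In x B) p ->
    forall C : list U,
      exists q : U -> U,
        gen_group U (fun g => Iso_fix U d (fun x => In x A) g \/
                              Iso_fix U d (fun x => In x B) g) q /\
        (forall x, In x C -> q x = p x).
Proof.
  intros p Hp C. revert A B p Hp.
  induction C as [|c C IH]; intros A B p Hp.
  - exists (fun x => x). split; [apply gen_id|]. intros x [].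
  - destruct (SPgen U d HU A B p c Hp) as [g [Hg Eg]].
    destruct (grp_inv U d HU A B g Hg) as [gi [Hgig [H1 H2]]].
    destruct (grp_iso U d HU A B gi Hgig) as [Hgid _].
    destruct Hp as [[Hpd Hps] Hpf].
    assert (Hp' : Iso_fix U d (fun x => In x (c :: A) /\ In x (c :: B)) (fun x => gi (p x))).
    { split; [split|].
      - intros x y. rewrite Hgid; auto.
      - intros y. destruct (Hps (g y)) as [x Hx]. exists x. rewrite Hx; auto.
      - intros x [[Ex|HxA] [Ex'|HxB]];
          try (rewrite <- Ex; rewrite <- Eg; apply H2);
          try (rewrite <- Ex'; rewrite <- Eg; apply H2).
        rewrite Hpf by auto. apply (grp_fix U d A B gi Hgig); auto. }
    destruct (IH (c :: A) (c :: B) _ Hp') as [q' [Hq' Eq']].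
    exists (fun x => g (q' x)). split.
    + apply gen_comp; auto. apply (grp_mono U d A B (c :: A) (c :: B)); auto; intros; simpl; auto.
    + intros x [Ex|Hx]; [subst x|].
      * rewrite (grp_fix U d (c :: A) (c :: B) q' Hq'); simpl; auto.
      * rewrite Eq'; auto.
Qed.
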